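(* Let $K$ be an $(\mathbb{F}_q,\mathbb{Z})$-field, $\mathcal{L}$ a language expanding $(D^{(2)},\{R_{n,m}\}_{n,m})$, and $\Delta$ a collection of functions order-definable in $\mathcal{L}$. Let $$C=\{(x,t)\in D\times K:\mathrm{ord}\,a_1(x)\ \square_1\ \mathrm{ord}(t-c(x))\ \square_2\ \mathrm{ord}\,a_2(x),\ t-c(x)\in\lambda Q_{n,m}\}\subseteq K^{k+1}$$ be an $(\mathcal{L},\Delta)$-cell. Suppose that for every $l\in\mathbb{N}$ the set $\{x\in K^k:\mathrm{ord}\,a_1(x)\equiv l\bmod n\}$ can be partitioned as a finite union of $(\mathcal{L},\Delta)$-precells. Then the projection $P=\{x\in K^k:\exists t\,(x,t)\in C\}$ can be partitioned into finitely many $(\mathcal{L},\Delta)$-precells.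
   Context: Let $K$ be an $(\mathbb{F}_q,\mathbb{Z})$-field: a valued field with residue field isomorphic to $\mathbb{F}_q$ and value group elementarily equivalent to $\mathbb{Z}$. Notation: $\mathrm{ord}$ is the valuation ($\mathrm{ord}\,0=+\infty$), $\mathcal{O}_K$ the valuation ring, $\mathcal{M}_K$ its maximal ideal, $\pi_K$ an element of smallest positive order; integers $\ell$ added to orders mean $\ell\cdot\mathrm{ord}\,\pi_K$. For $n>0$, $P_n$ is the set of nonzero $n$-th powers. For $m>0$, $\mathrm{ac}_m:K^\times\to(\mathcal{O}_K/\pi_K^m)^\times$ is the unique group homomorphism with $\mathrm{ac}_m(\pi_K)=1$ and $\mathrm{ac}_m(u)\equiv u\bmod \pi_K^m$ for units $u$. Put $Q_{n,m}=\{x\in P_n\cdot(1+\mathcal{M}_K^m):\mathrm{ac}_m(x)=1\}$ and $\lambda Q_{n,m}=\{\lambda t:t\in Q_{n,m}\}$ for $\lambda\in K$ (so $0\cdot Q_{n,m}=\{0\}$). Relations: $R_{n,m}(x,y,z)\Leftrightarrow y-x\in zQ_{n,m}$; $D^{(2)}(x,y)\Leftrightarrow \mathrm{ord}\,x<\mathrm{ord}\,y$. Definable means definable with parameters from $K$. A function $f:K^k\to K$ is order-definable in $\mathcal{L}$ if $\{(x,t):\mathrm{ord}\,f(x)<\mathrm{ord}\,t\}$ is $\mathcal{L}$-definable. Cells: let $\mathcal{L}$ expand $(D^{(2)},\{R_{n,m}\})$ and $\Delta=\bigcup_k\Delta_k$, $\Delta_k$ a set of functions $K^k\to K$. An $(\mathcal{L},\Delta)$-precell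 in $K^k$ is a set $\{x\in K^k:\phi(x)\}$ with $\phi$ a Boolean combination of conditions $\mathrm{ord}\,a_1(x)<\mathrm{ord}\,a_2(x)+\ell$ ($a_i\in\Delta_k$, $\ell\in\mathbb{Z}$) and $b_1(x)-b_2(x)\in\lambda Q_{n,m}$ ($b_i$ quantifier-free $\mathcal{L}$-definable functions, $\lambda\in K$). An $(\mathcal{L},\Delta)$-cell in $K^{k+1}$ is a set $\{(x,t)\in D\times K:\mathrm{ord}\,a_1(x)\ \square_1\ \mathrm{ord}(t-c(x))\ \square_2\ \mathrm{ord}\,a_2(x),\ t-c(x)\in\lambda Q_{n,m}\}$ with $D$ an $(\mathcal{L},\Delta)$-precell in $K^k$, $\lambda\in K$, $n,m>0$, $a_1,a_2\in\Delta_k$, each $\square_i$ either $<$ or ''no condition'', and center $c:K^k\to K$ quantifier-free $\mathcal{L}$-definable. *)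

(* Defs.v *)
From HB Require Import structures.
From mathcomp Require Import all_boot all_order all_algebra.
Set Implicit Arguments. Unset Strict Implicit. Unset Printing Implicit Defensive.
Import GRing.Theory.
Local Open Scope ring_scope.

Record signature := Signature {
  fsym : Type; far : fsym -> nat;
  rsym : Type; rar : rsym -> nat }.

Inductive term (S : signature) : Type :=
  | tvar : nat -> term S
  | tapp (f : fsym S) : ('I_(far f) -> term S) -> term S.

Inductive formula (S : signature) : Type :=
  | fbot : formula S
  | feq : term S -> term S -> formula S
  | frel (r : rsym S) : ('I_(rar r) -> term S) -> formula S
  | fnot : formula S -> formula S
  | fand : formula S -> formula S -> formula S
  | f_or : formula S -> formula S -> formula S
  | fimp : formula S -> formula S -> formula S
  | fex : nat -> formula S -> formula S
  | fall : nat -> formula S -> formula S.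

Record interp (S : signature) (M : Type) := Interp {
  funI : forall f : fsym S, ('I_(far f) -> M) -> M;
  relI : forall r : rsym S, ('I_(rar r) -> M) -> Prop }.

Section Semantics.
Variables (S : signature) (M : Type) (I : interp S M).

Fixpoint teval (e : nat -> M) (t : term S) : M :=
  match t with
  | tvar n => e n
  | tapp f args => funI I (fun i => teval e (args i))
  end.

Definition upd (e : nat -> M) (n : nat) (a : M) : nat -> M :=
  fun i => if i == n then a else e i.

Fixpoint sat (e : nat -> M) (phi : formula S) : Prop :=
  match phi with
  | fbot => False
  | feq t1 t2 => teval e t1 = teval e t2
  | frel r args => relI I (fun i => teval e (args i))
  | fnot p => ~ sat e p
  | fand p1 p2 => sat e p1 /\ sat e p2
  | f_or p1 p2 => sat e p1 \/ sat e p2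
  | fimp p1 p2 => sat e p1 -> sat e p2
  | fex n p => exists a, sat (upd e n a) p
  | fall n p => forall a, sat (upd e n a) p
  end.
End Semantics.

Fixpoint qf (S : signature) (phi : formula S) : bool :=
  match phi with
  | fnot p => qf p
  | fand p1 p2 | f_or p1 p2 | fimp p1 p2 => qf p1 && qf p2
  | fex _ _ | fall _ _ => false
  | _ => true
  end.

Inductive og_fun := OZero | OAdd | ONeg.
Definition og_far (f : og_fun) : nat :=
  match f with OZero => 0 | OAdd => 2 | ONeg => 1 end.
Definition og_sig : signature := @Signature og_fun og_far unit (fun _ => 2%N).

Definition i0 : 'I_2 := ord0.
Definition i1 : 'I_2 := ord_max.

Definition og_interp (G : zmodType) (lt : G -> G -> Prop) : interp og_sig G :=
  @Interp og_sig G
    (fun f => match f return ('I_(og_far f) -> G) -> G with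
              | OZero => fun _ => 0
              | OAdd => fun a => a i0 + a i1
              | ONeg => fun a => - a ord0
              end)
    (fun _ a => lt (a i0) (a i1)).

Definition int_lt (x y : int) : Prop := (x < y)%R.

(* (G, lt) is elementarily equivalent to (Z, <) as an ordered group:
   every formula holds universally in G iff it does in Z (hence every
   sentence has the same truth value in both). *)
Definition elem_equiv_Z (G : zmodType) (lt : G -> G -> Prop) : Prop :=
  forall phi : formula og_sig,
    (forall e, sat (og_interp lt) e phi) <-> (forall e, sat (og_interp int_lt) e phi).

Record FqZField (q : nat) := FqZ {
  vK : fieldType;
  vG : zmodType;
  vlt : vG -> vG -> Prop;
  vv : vK -> vG;                     (* valuation on K^x (value at 0 irrelevant) *)
  vpi : vK;
  vac : nat -> vK -> vK;             (* ac_m, via unit representatives *)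
  vlt_irr : forall g, ~ vlt g g;
  vlt_trans : forall g h l, vlt g h -> vlt h l -> vlt g l;
  vlt_total : forall g h, vlt g h \/ g = h \/ vlt h g;
  vlt_add : forall g h l, vlt g h -> vlt (g + l) (h + l);
  vv_mul : forall x y, x != 0 -> y != 0 -> vv (x * y) = vv x + vv y;
  vv_add : forall x y, x != 0 -> y != 0 -> x + y != 0 ->
             ~ vlt (vv (x + y)) (vv x) \/ ~ vlt (vv (x + y)) (vv y);
  vv_surj : forall g, exists x, x != 0 /\ vv x = g;
  vG_Z : elem_equiv_Z vlt;
  vpi_neq0 : vpi != 0;
  vpi_pos : vlt 0 (vv vpi);
  vpi_min : forall x, x != 0 -> vlt 0 (vv x) -> ~ vlt (vv x) (vv vpi);
  (* residue field O_K / M_K isomorphic to F_q: a surjective ring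
     morphism O_K -> F_q with kernel M_K *)
  vres : exists (F : finFieldType) (r : vK -> F),
      #|F| = q /\
      let O := fun x : vK => x = 0 \/ ~ vlt (vv x) 0 in
      let Mx := fun x : vK => x = 0 \/ vlt 0 (vv x) in
      (forall x y, O x -> O y -> r (x + y) = r x + r y) /\
      (forall x y, O x -> O y -> r (x * y) = r x * r y) /\
      r 1 = 1 /\
      (forall z, exists x, O x /\ r x = z) /\
      (forall x, O x -> (r x = 0 <-> Mx x));
  (* ac_m : K^x -> (O_K / pi^m)^x, the group morphism with ac_m(pi)=1 and
     ac_m(u) = u mod pi^m for units u; values are represented by units of
     O_K, and equality in O_K/pi^m is congruence modulo pi^m O_K. *)
  vac_unit : forall m x, (0 < m)%N -> x != 0 -> vac m x != 0 /\ vv (vac m x) = 0;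
  vac_mul : forall m x y, (0 < m)%N -> x != 0 -> y != 0 ->
      vac m (x * y) - vac m x * vac m y = 0 \/
      ~ vlt (vv (vac m (x * y) - vac m x * vac m y)) (vv vpi *+ m);
  vac_pi : forall m, (0 < m)%N ->
      vac m vpi - 1 = 0 \/ ~ vlt (vv (vac m vpi - 1)) (vv vpi *+ m);
  vac_u : forall m u, (0 < m)%N -> u != 0 -> vv u = 0 ->
      vac m u - u = 0 \/ ~ vlt (vv (vac m u - u)) (vv vpi *+ m)
}.

Section Field.
Variables (q : nat) (K : FqZField q).
Local Notation F := (vK K).
Local Notation G := (vG K).
Local Notation lt := (@vlt q K).
Local Notation v := (@vv q K).
Local Notation pi := (vpi K).

(* ord : K -> Gamma u {+oo}, with None = +oo *)
Definition ord (x : F) : option G := if x == 0 then None else Some (v x).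

(* ord o1 < ord o2 + l   (l integer, meaning l * ord pi) *)
Definition ordlt (o1 o2 : option G) (l : int) : Prop :=
  match o1, o2 with
  | Some g1, Some g2 => lt g1 (g2 + (v pi) *~ l)
  | Some _, None => True
  | None, _ => False
  end.

(* ord o = l mod n, for o in Gamma (+oo is congruent to nothing) *)
Definition ordcong (o : option G) (l n : nat) : Prop :=
  match o with
  | Some g => exists h : G, g - (v pi) *+ l = h *+ n
  | None => False
  end.

(* a = b mod pi^m O_K, i.e. ord (a - b) >= m *)
Definition congm (m : nat) (a b : F) : Prop :=
  ~ ordlt (ord (a - b)) (Some (v pi *+ m)) 0.

Definition Pn (n : nat) (x : F) : Prop := exists w, w != 0 /\ x = w ^+ n.

(* Q_{n,m} = { x in P_n (1 + M^m) : ac_m x = 1 }, with M_K^m = pi^m O_K *)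
Definition Qnm (n m : nat) (x : F) : Prop :=
  (exists y z, Pn n y /\ congm m z 1 /\ x = y * z) /\
  x != 0 /\ congm m (@vac q K m x) 1.

Definition inQ (lam : F) (n m : nat) (y : F) : Prop :=
  exists t, Qnm n m t /\ y = lam * t.

Definition Drel (x y : F) : Prop := ordlt (ord x) (ord y) 0.
Definition Rrel (n m : nat) (x y z : F) : Prop := inQ z n m (y - x).

Definition j3 (i : nat) : 'I_3 := inord i.

(* A language L expanding (D^(2), {R_{n,m}}): a signature interpreted in K
   having symbols for D and for every R_{n,m} (n, m > 0). *)
Record expansion := Expansion {
  Lsig : signature;
  LI : interp Lsig F;
  LD : exists r (H : rar r = 2%N), forall args : 'I_2 -> F,
         @relI Lsig F LI r (args \o cast_ord H) <-> Drel (args i0) (args i1);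
  LR : forall n m, (0 < n)%N -> (0 < m)%N ->
         exists r (H : rar r = 3%N), forall args : 'I_3 -> F,
         @relI Lsig F LI r (args \o cast_ord H) <->
         Rrel n m (args (j3 0)) (args (j3 1)) (args (j3 2))
}.

Variable L : expansion.

(* environment: variables 0..k-1 get x, the others are parameters e *)
Definition extend (k : nat) (x : 'I_k -> F) (e : nat -> F) : nat -> F :=
  fun i => match @insub _ (fun j => (j < k)%N) 'I_k i with
           | Some j => x j
           | None => e i
           end.

Definition definable (k : nat) (S : ('I_k -> F) -> Prop) : Prop :=
  exists (phi : formula (Lsig L)) (e : nat -> F),
    forall x, S x <-> sat (LI L) (extend x e) phi.

Definition qf_definable (k : nat) (S : ('I_k -> F) -> Prop) : Prop :=
  exists (phi : formula (Lsig L)) (e : nat -> F),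
    qf phi /\ forall x, S x <-> sat (LI L) (extend x e) phi.

Definition init (k : nat) (z : 'I_k.+1 -> F) : 'I_k -> F :=
  fun i => z (widen_ord (leqnSn k) i).

Definition qf_def_fun (k : nat) (f : ('I_k -> F) -> F) : Prop :=
  qf_definable (fun z : 'I_k.+1 -> F => z ord_max = f (init z)).

Definition order_definable (k : nat) (f : ('I_k -> F) -> F) : Prop :=
  definable (fun z : 'I_k.+1 -> F => ordlt (ord (f (init z))) (ord (z ord_max)) 0).

Variable Delta : forall k : nat, (('I_k -> F) -> F) -> Prop.

Inductive precell_cond (k : nat) : (('I_k -> F) -> Prop) -> Prop :=
  | pc_ord (a1 a2 : ('I_k -> F) -> F) (l : int) :
      Delta a1 -> Delta a2 ->
      precell_cond (fun x => ordlt (ord (a1 x)) (ord (a2 x)) l)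
  | pc_Q (b1 b2 : ('I_k -> F) -> F) (lam : F) (n m : nat) :
      qf_def_fun b1 -> qf_def_fun b2 -> (0 < n)%N -> (0 < m)%N ->
      precell_cond (fun x => inQ lam n m (b1 x - b2 x))
  | pc_not P : precell_cond P -> precell_cond (fun x => ~ P x)
  | pc_and P1 P2 : precell_cond P1 -> precell_cond P2 ->
      precell_cond (fun x => P1 x /\ P2 x)
  | pc_or P1 P2 : precell_cond P1 -> precell_cond P2 ->
      precell_cond (fun x => P1 x \/ P2 x).

Definition precell (k : nat) (S : ('I_k -> F) -> Prop) : Prop :=
  exists P, precell_cond P /\ forall x, S x <-> P x.

(* optional condition "o1 < o2" (b = true) or no condition (b = false) *)
Definition boxlt (b : bool) (o1 o2 : option G) : Prop :=
  if b then ordlt o1 o2 0 else True.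

Definition cell_set (k : nat) (D : ('I_k -> F) -> Prop) (lam : F) (n m : nat)
  (a1 a2 c : ('I_k -> F) -> F) (b1 b2 : bool) (x : 'I_k -> F) (t : F) : Prop :=
  D x /\ boxlt b1 (ord (a1 x)) (ord (t - c x)) /\
  boxlt b2 (ord (t - c x)) (ord (a2 x)) /\ inQ lam n m (t - c x).

Definition precell_partition (k : nat) (S : ('I_k -> F) -> Prop) : Prop :=
  exists (N : nat) (Ps : 'I_N -> ('I_k -> F) -> Prop),
    (forall i, precell (Ps i)) /\
    (forall x, S x <-> exists i, Ps i x) /\
    (forall i j x, i != j -> Ps i x -> Ps j x -> False).

End Field.

(* Main.v *)
Require Import Defs.
From mathcomp Require Import all_boot all_order all_algebra ring zify.
Set Implicit Arguments. Unset Strict Implicit. Unset Printing Implicit Defensive.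
Import GRing.Theory.
Local Open Scope ring_scope.

Section OG.
Variables (q : nat) (K : FqZField q).
Local Notation G := (vG K).
Local Notation lt := (@vlt q K).
Local Notation v := (@vv q K).
Local Notation p := (vv (vpi K)).

Lemma lt_addr (g h l : G) : lt g h -> lt (g + l) (h + l).
Proof. exact: vlt_add. Qed.
Lemma lt_addl (g h l : G) : lt g h -> lt (l + g) (l + h).
Proof. by rewrite ![l + _]addrC; apply: vlt_add. Qed.
Lemma lt_asym (g h : G) : lt g h -> lt h g -> False.
Proof. by move=> a b; apply: (@vlt_irr q K g); apply: vlt_trans a b. Qed.
Lemma lt_sub0 (g h : G) : lt g h <-> lt 0 (h - g).
Proof.
split=> H; first by move/(lt_addr (-g)): H; rewrite subrr.
by move/(lt_addr g): H; rewrite add0r subrK.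
Qed.
Lemma le_total (g h : G) : lt g h \/ ~ lt g h.
Proof. case: (vlt_total g h) => [|[->|H]]; [by left|by right; apply: vlt_irr|].
by right => H'; apply: lt_asym H H'. Qed.
Lemma nlt_le (g h : G) : ~ lt g h -> lt h g \/ h = g.
Proof. by case: (vlt_total g h) => [//|[->|]]; [right|left]. Qed.
Lemma lt_nle_trans (a b c : G) : lt a b -> ~ lt c b -> lt a c.
Proof. move=> H1 H2; case: (nlt_le H2) => [H|<-]; last done. exact: vlt_trans H1 H. Qed.
Lemma nle_lt_trans (a b c : G) : ~ lt b a -> lt b c -> lt a c.
Proof. move=> H1 H2; case: (nlt_le H1) => [H|->]; last done. exact: vlt_trans H H2. Qed.
Lemma nle_trans (a b c : G) : ~ lt b a -> ~ lt c b -> ~ lt c a.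
Proof. move=> H1 H2 H3; case: (nlt_le H1) => [H|E]; last by subst. 
apply: H2; exact: vlt_trans H3 H. Qed.
Lemma lt_add2 (a b c d : G) : lt a b -> lt c d -> lt (a + c) (b + d).
Proof. move=> H1 H2; apply: (vlt_trans (lt_addr c H1)); exact: lt_addl. Qed.
Lemma le_add2 (a b c d : G) : ~ lt b a -> ~ lt d c -> ~ lt (b + d) (a + c).
Proof. move=> H1 H2; case: (nlt_le H1) => [H|->].
  case: (nlt_le H2) => [H'|->]; first by move=> H3; apply: lt_asym H3 (lt_add2 H H').
  by move=> H3; apply: lt_asym H3 (lt_addr _ H).
case: (nlt_le H2) => [H'|->]; last exact: vlt_irr.
by move=> H3; apply: lt_asym H3 (lt_addl _ H').
Qed.
Lemma lt_opp (g h : G) : lt g h -> lt (- h) (- g).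
Proof. move=> H; move: (lt_addr (- g - h) H).
have -> : g + (- g - h) = - h by rewrite addrA subrr add0r.
by have -> : h + (- g - h) = - g by rewrite addrC -addrA addNr addr0. Qed.
Lemma pos_muln (g : G) n : lt 0 g -> lt 0 (g *+ n.+1).
Proof. move=> H; elim: n => [|n IH]; first by rewrite mulr1n.
by rewrite mulrS -[0]addr0; apply: lt_add2. Qed.
Lemma nneg_muln (g : G) n : ~ lt g 0 -> ~ lt (g *+ n) 0.
Proof. move=> H; elim: n => [|n IH]; first by rewrite mulr0n; apply: vlt_irr.
by rewrite mulrS -[0]addr0; apply: le_add2. Qed.
Lemma lt_muln (g h : G) n : lt g h -> lt (g *+ n.+1) (h *+ n.+1).
Proof. move=> /lt_sub0 H; apply/lt_sub0; rewrite -mulrnBl; exact: pos_muln. Qed.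
Lemma lt_muln_rev (g h : G) n : lt (g *+ n.+1) (h *+ n.+1) -> lt g h.
Proof. move=> H; case: (le_total g h) => // H1; case: (nlt_le H1) => [H2|E].
  by case: (lt_asym H (lt_muln n H2)).
by subst; case: (vlt_irr H). Qed.
Lemma le_muln (a b : G) n : ~ lt b a -> ~ lt (b *+ n) (a *+ n).
Proof. move=> H; case: (nlt_le H) => [H1|->]; last exact: vlt_irr.
case: n => [|n]; first by rewrite !mulr0n; apply: vlt_irr.
move=> H2; exact: lt_asym H2 (lt_muln n H1). Qed.
Lemma p_pos : lt 0 p. Proof. exact: vpi_pos. Qed.
Lemma discrete (g : G) : lt 0 g -> ~ lt g p.
Proof. move=> H; case: (vv_surj g) => x [x0 E]; rewrite -E in H *; exact: vpi_min. Qed.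
Lemma discrete2 (g h : G) : lt g (h + p) -> ~ lt h g.
Proof. move=> H1 H2; have /discrete H3 := proj1 (lt_sub0 h g) H2.
apply: H3; move/(lt_addr (-h)): H1; by rewrite addrAC subrr add0r. Qed.
End OG.


Section Val.
Variables (q : nat) (K : FqZField q).
Local Notation F := (vK K).
Local Notation G := (vG K).
Local Notation lt := (@vlt q K).
Local Notation v := (@vv q K).
Local Notation p := (vv (vpi K)).

Lemma v1 : v 1 = 0.
Proof. have := @vv_mul q K 1 1 (oner_neq0 _) (oner_neq0 _).
by rewrite mulr1 => E; apply: (@addrI _ (v 1)); rewrite addr0 -E. Qed.

Lemma vN1 : ~ lt (v (-1)) 0.
Proof. move=> H; have := @vv_mul q K (-1) (-1).
rewrite mulrNN mulr1 v1 oppr_eq0 oner_neq0 => /(_ isT isT) E.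
by have := lt_add2 H H; rewrite -E addr0 => /vlt_irr. Qed.

Lemma ultra (x y : F) : x != 0 -> y != 0 -> x + y != 0 ->
  ~ lt (v (x + y)) (v x) \/ ~ lt (v (x + y)) (v y).
Proof. exact: vv_add. Qed.

Lemma ultra_strict (x y : F) : x != 0 -> y != 0 -> lt (v x) (v y) -> v (x + y) = v x.
Proof.
move=> x0 y0 H.
have xy0 : x + y != 0.
  apply/negP => /eqP E; have : x = - y by apply/eqP; rewrite -subr_eq0 opprK E.
  move=> Ex; move: H; rewrite Ex.
  have -> : - y = y * (-1) by rewrite mulrN1.
  rewrite vv_mul ?oppr_eq0 ?oner_neq0 //.
  case: (nlt_le vN1) => [Hn|<-]; last by rewrite addr0 => /vlt_irr.
  move=> H'; have := lt_addl (v y) Hn; rewrite addr0 => H''. exact: lt_asym H' H''.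
have E1 : ~ lt (v (x + y)) (v x).
  case: (ultra x0 y0 xy0) => // H1 H2; apply: H1; exact: vlt_trans H2 H.
(* x = (x+y) + (-y) *)
have Hy : v (- y) = v y.
  have -> : - y = y * (-1) by rewrite mulrN1.
  rewrite vv_mul ?oppr_eq0 ?oner_neq0 //.
  case: (nlt_le vN1) => [Hn|<-]; last by rewrite addr0.
  exfalso; have := @vv_mul q K (-1) (-1); rewrite mulrNN mulr1 v1 oppr_eq0 oner_neq0.
  move=> /(_ isT isT) E; have := lt_add2 Hn Hn; rewrite -E addr0 => /vlt_irr //.
have ny0 : - y != 0 by rewrite oppr_eq0.
have x1 : x + y + - y != 0 by rewrite addrK.
case: (ultra xy0 ny0 x1); rewrite addrK.
- move=> H1; case: (nlt_le E1) => [H2|//]; by case: H1.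
- rewrite Hy => H1; by case: H1.
Qed.

Lemma vexp (x : F) n : x != 0 -> v (x ^+ n) = v x *+ n.
Proof. move=> x0; elim: n => [|n IH]; first by rewrite expr0 mulr0n v1.
by rewrite exprS vv_mul ?expf_neq0 // IH mulrS. Qed.

Lemma vinv (x : F) : x != 0 -> v (x^-1) = - v x.
Proof. move=> x0; have := @vv_mul q K x x^-1 x0; rewrite invr_eq0 x0 mulfV // v1.
move=> /(_ isT) E; apply: (@addrI _ (v x)); by rewrite subrr -E. Qed.

Definition small (m : nat) (y : F) := y = 0 \/ ~ lt (v y) (p *+ m).

Lemma congmE m a b : congm (K:=K) m a b <-> small m (a - b).
Proof. rewrite /congm /ordlt /ord /small mulr0z addr0.
case: eqP => [->|N]; split=> H; [by left|by []|by right|].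
by case: H. Qed.

Lemma small0 m : small m 0. Proof. by left. Qed.
Lemma smallD m a b : small m a -> small m b -> small m (a + b).
Proof.
move=> [->|Ha]; first by rewrite add0r. move=> [->|Hb]; first by rewrite addr0; right.
have [a0|a0] := eqVneq a 0; first by rewrite a0 add0r; right.
have [b0|b0] := eqVneq b 0; first by rewrite b0 addr0; right.
have [ab0|ab0] := eqVneq (a + b) 0; first by left.
right; case: (ultra a0 b0 ab0) => H; [exact: nle_trans Ha H|exact: nle_trans Hb H].
Qed.
Lemma smallM m a b : small m a -> (b = 0 \/ ~ lt (v b) 0) -> small m (a * b).
Proof.
move=> [->|Ha]; first by rewrite mul0r; left. move=> [->|Hb]; first by rewrite mulr0; left.
have [a0|a0] := eqVneq a 0; first by rewrite a0 mul0r; left.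
have [b0|b0] := eqVneq b 0; first by rewrite b0 mulr0; left.
right; rewrite vv_mul //; apply: nle_trans Ha _.
by rewrite -{2}[v a]addr0; apply: le_add2 => //; apply: vlt_irr.
Qed.
Lemma smallN m a : small m a -> small m (- a).
Proof. move=> H; rewrite -mulrN1; apply: smallM H _; right; exact: vN1. Qed.

Definition unit0 (u : F) := u != 0 /\ v u = 0.
Lemma unitO u : unit0 u -> u = 0 \/ ~ lt (v u) 0.
Proof. by case=> _ ->; right; apply: vlt_irr. Qed.
Lemma unitV u : unit0 u -> unit0 u^-1.
Proof. by case=> u0 E; split; [rewrite invr_eq0|rewrite vinv // E oppr0]. Qed.

Lemma ac_unit m x : (0 < m)%N -> x != 0 -> unit0 (@vac q K m x).
Proof. exact: vac_unit. Qed.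

Lemma acM m x y : (0 < m)%N -> x != 0 -> y != 0 ->
  small m (@vac q K m (x * y) - @vac q K m x * @vac q K m y).
Proof. move=> *; case: (@vac_mul q K m x y) => //; [by left|by right]. Qed.

Lemma acU m u : (0 < m)%N -> unit0 u -> small m (@vac q K m u - u).
Proof. move=> m0 [u0 E]; case: (vac_u m0 u0 E); [by left|by right]. Qed.

Lemma Q_exists n m (g : G) : (0 < m)%N -> exists t, Qnm (K:=K) n m t /\ v t = g *+ n.
Proof.
move=> m0; case: (vv_surj g) => x [x0 vx].
set u := @vac q K m x; have uU : unit0 u by apply: ac_unit.
have u0 : u != 0 by case: uU.
set w := x / u.
have w0 : w != 0 by rewrite mulf_neq0 ?invr_eq0.
have vw : v w = g by rewrite vv_mul ?invr_eq0 // vinv //; case: uU => _ ->; rewrite oppr0 addr0.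
have wu : w * u = x by rewrite /w mulfVK.
have acw : small m (@vac q K m w - 1).
  have H1 := acM m0 w0 u0; rewrite wu -/u in H1.
  have H2 : small m (@vac q K m w * (@vac q K m u - u)).
    rewrite mulrC; apply: smallM (acU m0 uU) (unitO (ac_unit m0 w0)).
  have H3 := smallD H1 H2.
  have H4 := smallM H3 (unitO (unitV uU)).
  have -> : @vac q K m w - 1 = - ((u - @vac q K m w * @vac q K m u + @vac q K m w * (@vac q K m u - u)) * u^-1).
    by field.
  exact: smallN.
have acwn : forall k, small m (@vac q K m (w ^+ k) - 1).
  elim=> [|k IH].
    rewrite expr0; apply: acU => //; split; [exact: oner_neq0| exact: v1].
  rewrite exprS.
  have H1 := acM m0 w0 (expf_neq0 k w0).
  have H2 : small m (@vac q K m w * (@vac q K m (w ^+ k) - 1)).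
    rewrite mulrC; apply: smallM IH (unitO (ac_unit m0 w0)).
  have -> : @vac q K m (w * w ^+ k) - 1 = (@vac q K m (w * w ^+ k) - @vac q K m w * @vac q K m (w ^+ k))
     + (@vac q K m w * (@vac q K m (w ^+ k) - 1) + (@vac q K m w - 1)) by ring.
  by apply: smallD H1 (smallD H2 acw).
exists (w ^+ n); split; last by rewrite vexp // vw.
split; last split.
- exists (w ^+ n), 1; split; first by exists w.
  split; last by rewrite mulr1.
  by apply/congmE; rewrite subrr; left.
- exact: expf_neq0.
- by apply/congmE; apply: acwn.
Qed.

Lemma Q_val n m t : (0 < m)%N -> Qnm (K:=K) n m t -> t != 0 /\ exists g, v t = g *+ n.
Proof.
move=> m0; case=> [[y [z [[w [w0 ->]] [/congmE Hz ->]]]] [t0 _]]; split => //.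
have z0 : z != 0 by move: t0; rewrite mulf_eq0 negb_or => /andP[].
have vz : v z = 0.
  have [z1|z1] := eqVneq (z - 1) 0.
    by move/eqP: z1; rewrite subr_eq0 => /eqP ->; apply: v1.
  case: Hz => [/eqP|Hz]; first by rewrite (negPf z1).
  have : lt (v 1) (v (z - 1)).
    rewrite v1; apply: lt_nle_trans Hz.
    case: (m) m0 => [//|m'] _.
    exact: pos_muln (p_pos K).
  move/(ultra_strict (oner_neq0 _) z1); by rewrite addrC subrK v1.
exists (v w); by rewrite vv_mul ?expf_neq0 // vexp // vz addr0.
Qed.
End Val.

Import Num.Theory.

Definition pair2 (a b : term og_sig) : 'I_2 -> term og_sig :=
  fun i => if val i == 0%N then a else b.
Definition tzero : term og_sig := @tapp og_sig OZero (fun _ => @tvar og_sig 0).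
Definition tadd (a b : term og_sig) : term og_sig := @tapp og_sig OAdd (pair2 a b).
Definition flt (a b : term og_sig) : formula og_sig := @Defs.frel og_sig tt (pair2 a b).
Fixpoint tmul (k : nat) (t : term og_sig) : term og_sig :=
  match k with 0 => tzero | k'.+1 => tadd t (tmul k' t) end.
Definition X := @tvar og_sig 0. Definition Pv := @tvar og_sig 1.
Definition Y := @tvar og_sig 2. Definition H := @tvar og_sig 3.
Fixpoint disj (n N : nat) : formula og_sig :=
  match N with 0 => fbot og_sig
  | N'.+1 => f_or (disj n N') (feq X (tadd (tmul n H) (tmul N' Pv))) end.
Definition resphi (n : nat) : formula og_sig :=
  fimp (fand (flt tzero Pv) (fall 2 (fimp (flt tzero Y) (fnot (flt Y Pv)))))
       (fex 3 (disj n n)).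

Section Tr.
Variables (M : zmodType) (lt : M -> M -> Prop).
Lemma teval_zero e : teval (og_interp lt) e tzero = 0. Proof. by []. Qed.
Lemma teval_add e a b : teval (og_interp lt) e (tadd a b) =
  teval (og_interp lt) e a + teval (og_interp lt) e b. Proof. by []. Qed.
Lemma teval_mul e k t : teval (og_interp lt) e (tmul k t) = teval (og_interp lt) e t *+ k.
Proof. elim: k => [|k IH] //=; by rewrite mulrS -IH. Qed.
Lemma sat_lt e a b : sat (og_interp lt) e (flt a b) <->
  lt (teval (og_interp lt) e a) (teval (og_interp lt) e b). Proof. by []. Qed.
Lemma sat_disj e n N : sat (og_interp lt) e (disj n N) <->
  exists l, (l < N)%N /\ e 0%N = e 3%N *+ n + e 1%N *+ l.
Proof.
elim: N => [|N IH] /=; first by split=> // [[l []]].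
rewrite IH /= !teval_mul /=; split.
- case=> [[l [Hl E]]|E]; [exists l; split=> //; exact: ltnW| by exists N].
- case=> l [Hl E]; case: (ltnP l N) => Hl'; [left; by exists l|right].
  have -> : N = l by apply/eqP; rewrite eqn_leq Hl'; rewrite ltnS in Hl.
  done.
Qed.
End Tr.

Lemma resphi_Z n : (0 < n)%N -> forall e, sat (og_interp int_lt) e (resphi n).
Proof.
move=> n0 e /= [Hp Hmin].
have p1 : e 1%N = 1.
  have := Hmin 1; rewrite /upd /= => /(_ isT) H1.
  move: Hp H1; rewrite /int_lt /=; lia.
exists ((e 0%N) %/ n)%Z.
apply/(sat_disj _ _ n n); rewrite /upd /= p1.
exists `|(e 0%N %% n)%Z|%N; split.
- have := @ltz_pmod (e 0%N) n; have := @modz_ge0 (e 0%N) n; lia.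
- have := divz_eq (e 0%N) n; have := @modz_ge0 (e 0%N) n.
  set d := (e 0%N %/ n)%Z; set r := (e 0%N %% n)%Z => H1 H2.
  have r0 : 0 <= r by apply: H1; rewrite -lt0n.
  rewrite {1}H2; congr (_ + _); first by rewrite -mulrzz.
  rewrite natz abszE ger0_norm //.
Qed.


Section Res.
Variables (q : nat) (K : FqZField q).
Local Notation F := (vK K).
Local Notation G := (vG K).
Local Notation lt := (@vlt q K).
Local Notation v := (@vv q K).
Local Notation p := (vv (vpi K)).

Lemma residue n (g : G) : (0 < n)%N -> exists h l, (l < n)%N /\ g = h *+ n + p *+ l.
Proof.
move=> n0.
have := proj2 (@vG_Z q K (resphi n)) (resphi_Z n0).
set e : nat -> G := fun i => match i with 0%N => g | 1%N => p | _ => 0 end.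
move=> /(_ e) /= HH.
have [|h] := HH.
  split; first exact: vpi_pos.
  move=> a; rewrite /upd /=; exact: discrete.
move=>  /(sat_disj _ _ n n) [l [Hl E]]; exists h, l; split => //.
Qed.

Lemma residue_uniq n (g h h' : G) l l' : (l < n)%N -> (l' < n)%N ->
  g = h *+ n + p *+ l -> g = h' *+ n + p *+ l' -> l = l'.
Proof.
wlog : l l' h h' / (l <= l')%N.
  move=> W Hl Hl' E E'; case: (leqP l l') => H; first exact: (W l l' h h').
  symmetry; apply: (W l' l h' h) => //; exact: ltnW.
move=> le Hl Hl' E E'.
case: (ltnP l l') => lt'; last by apply/eqP; rewrite eqn_leq le lt'.
exfalso.
have EE : h *+ n + p *+ l = h' *+ n + p *+ l' by rewrite -E -E'.
have D : (h - h') *+ n = p *+ (l' - l).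
  rewrite mulrnBr; last exact: ltnW.
  rewrite mulrnBl.
  have -> : h *+ n = h' *+ n + p *+ l' - p *+ l by rewrite -EE addrK.
  by rewrite -!addrA addrC !addrA subrK.
have k0 : exists k, (l' - l = k.+1)%N by exists (l' - l).-1; rewrite prednK // subn_gt0.
case: k0 => k Ek; rewrite Ek in D.
have kn : (k.+1 < n)%N by rewrite -Ek; move: Hl' lt'; clear; lia.
clear E E' EE.
case: n Hl Hl' D kn => [//|n'] Hl Hl' D kn.
have P1 : lt 0 ((h - h') *+ n'.+1) by rewrite D; exact: pos_muln (p_pos K).
have P2 : lt 0 (h - h') by apply: (@lt_muln_rev q K _ _ n'); rewrite mul0rn.
have P3 := discrete P2.
have P4 := le_muln (n:=n'.+1) P3.
apply: P4; rewrite D.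
have -> : (n'.+1 = k.+1 + (n'.+1 - k.+1))%N by rewrite subnKC //; exact: ltnW.
rewrite mulrnDr -{1}[p *+ k.+1]addr0; apply: lt_addl.
have [j ->] : exists j, (n'.+1 - k.+1 = j.+1)%N by exists (n'.+1 - k.+1).-1; rewrite prednK // subn_gt0.
exact: pos_muln (p_pos K).
Qed.

End Res.


Section Part.
Variables (q : nat) (K : FqZField q) (L : expansion K)
  (Delta : forall k : nat, (('I_k -> vK K) -> vK K) -> Prop) (k : nat).
Local Notation T := ('I_k -> vK K).

Lemma pp_ext (A B : T -> Prop) : (forall x, A x <-> B x) ->
  precell_partition L Delta A -> precell_partition L Delta B.
Proof.
move=> E [N [Ps [H1 [H2 H3]]]]; exists N, Ps; split => //; split => // x.
by rewrite -E.
Qed.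

Lemma pp_empty (A : T -> Prop) : (forall x, ~ A x) -> precell_partition L Delta A.
Proof.
move=> E; exists 0%N, (fun _ _ => False); split; first by case.
split; last by case.
by move=> x; split=> [/E|[[]]].
Qed.

Lemma pp_precell (A : T -> Prop) : precell L Delta A -> precell_partition L Delta A.
Proof.
move=> H; exists 1%N, (fun _ => A); split => //; split.
  by move=> x; split=> [a|[]//]; exists ord0.
by move=> i j x; rewrite !ord1 eqxx.
Qed.

Lemma pp_inter (A B : T -> Prop) : precell_partition L Delta A -> precell L Delta B ->
  precell_partition L Delta (fun x => A x /\ B x).
Proof.
move=> [N [Ps [H1 [H2 H3]]]] [PB [cB EB]].
exists N, (fun i x => Ps i x /\ B x); split.
  move=> i; case: (H1 i) => P [cP EP]; exists (fun x => P x /\ PB x); split.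
    exact: pc_and.
  by move=> x; rewrite EP EB.
split.
  move=> x; rewrite H2; split; [by case=> [[i Hi] Hb]; exists i|by case=> i [Hi Hb]; split => //; exists i].
by move=> i j x ij [Hi _] [Hj _]; exact: H3 ij Hi Hj.
Qed.

Lemma pp_union2 (A B : T -> Prop) : precell_partition L Delta A -> precell_partition L Delta B ->
  (forall x, A x -> B x -> False) ->
  precell_partition L Delta (fun x => A x \/ B x).
Proof.
move=> [N1 [P1 [H11 [H12 H13]]]] [N2 [P2 [H21 [H22 H23]]]] Dj.
exists (N1 + N2)%N, (fun i => match split i with inl a => P1 a | inr b => P2 b end).
split; first by move=> i; case: (split i).
split.
  move=> x; rewrite H12 H22; split.
  - case=> [[i Hi]|[i Hi]]; [exists (unsplit (inl i))|exists (unsplit (inr i))];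
      by rewrite unsplitK.
  - case=> i; case: (split i) => a Ha; [left|right]; by exists a.
move=> i j x ij.
case: (splitP i) => [a Ea|a Ea]; case: (splitP j) => [b Eb|b Eb].
- move=> Ha Hb; apply: (H13 a b x) _ Ha Hb; apply: contra ij => /eqP ab.
  by apply/eqP/val_inj; rewrite /= Ea Eb ab.
- move=> Ha Hb; apply: (Dj x); [by rewrite H12; exists a|by rewrite H22; exists b].
- move=> Ha Hb; apply: (Dj x); [by rewrite H12; exists b|by rewrite H22; exists a].
- move=> Ha Hb; apply: (H23 a b x) _ Ha Hb; apply: contra ij => /eqP ab.
  by apply/eqP/val_inj; rewrite /= Ea Eb ab.
Qed.

Lemma pp_unionN (n : nat) (S : nat -> T -> Prop) :
  (forall l, (l < n)%N -> precell_partition L Delta (S l)) ->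
  (forall l l' x, (l < n)%N -> (l' < n)%N -> l <> l' -> S l x -> S l' x -> False) ->
  precell_partition L Delta (fun x => exists l, (l < n)%N /\ S l x).
Proof.
elim: n => [|n IH] HP HD.
  by apply: pp_empty => x [l []].
apply: (@pp_ext (fun x => (exists l, (l < n)%N /\ S l x) \/ S n x)).
  move=> x; split.
  - case=> [[l [Hl H]]|H]; [exists l; split => //; exact: ltnW|exists n; split=> //].
  - case=> l [Hl H]; case: (ltnP l n) => Hl'; [left; by exists l|right].
    have E : l = n by move: Hl Hl'; clear; lia.
    by rewrite -E.
apply: pp_union2.
- apply: IH; first by move=> l Hl; apply: HP; exact: ltnW.
  move=> l l' x Hl Hl'; apply: HD; exact: ltnW.
- exact: HP.
- move=> x [l [Hl H1]] H2; apply: (HD l n x) => //; [exact: ltnW| move=> E; subst; by rewrite ltnn in Hl].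
Qed.
End Part.


Section Main.
Variables (q : nat) (K : FqZField q).
Local Notation F := (vK K).
Local Notation G := (vG K).
Local Notation lt := (@vlt q K).
Local Notation v := (@vv q K).
Local Notation p := (vv (vpi K)).

Lemma ordlt0 (a b : G) : ordlt (K:=K) (Some a) (Some b) 0 <-> lt a b.
Proof. by rewrite /ordlt mulr0z addr0. Qed.

Lemma ordltN (a b : G) r : ordlt (K:=K) (Some a) (Some b) (- (r%:Z)) <-> lt (a + p *+ r) b.
Proof.
rewrite /ordlt mulrNz; split => H.
- by move: (lt_addr (p *+ r) H); rewrite subrK.
- by move: (lt_addr (- (p *+ r)) H); rewrite addrK.
Qed.

Lemma above n (g c0 : G) : (0 < n)%N -> exists gam, lt g (c0 + gam *+ n).
Proof.
case: n => [//|n] _.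
case: (le_total (g - c0) 0) => H.
  exists 0; rewrite mul0rn addr0; move/(lt_addr c0): H; by rewrite subrK add0r.
exists (g - c0 + p); rewrite mulrS.
have H1 : ~ lt ((g - c0 + p) *+ n) 0.
  apply: nneg_muln; move=> H2; apply: H; apply: vlt_trans _ H2.
  by rewrite -{1}[g - c0]addr0; apply: lt_addl; exact: p_pos.
have H2 : lt (g - c0) (g - c0 + p + (g - c0 + p) *+ n).
  apply: lt_nle_trans (_ : lt _ (g - c0 + p + 0)) _.
    by rewrite addr0 -{1}[g - c0]addr0; apply: lt_addl; exact: p_pos.
  by apply: le_add2 => //; apply: vlt_irr.
by move/(lt_addl c0): H2; rewrite (addrC c0 (g - c0)) subrK.
Qed.

Lemma below n (g c0 : G) : (0 < n)%N -> exists gam, lt (c0 + gam *+ n) g.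
Proof.
move=> n0; case: (above (- g) (- c0) n0) => gam H; exists (- gam).
move/lt_opp: H; by rewrite opprK opprD opprK mulNrn.
Qed.


Lemma zrearr (a b c d : G) : a + b + (c - a + d) = c + (b + d).
Proof.
rewrite [c - a]addrC -!addrA (addrCA b) addNKr. by rewrite addrCA.
Qed.

Lemma nat_r n l s0 : (0 < n)%N -> (l < n)%N -> (s0 < n)%N ->
  exists kk, (l.+1 + (s0 + n - l.+1) %% n = s0 + kk * n)%N.
Proof.
move=> n0 ln sn.
case: (ltnP (s0 + n - l.+1) n) => H.
  exists 1%N; rewrite modn_small //; lia.
exists 0%N; have -> : (s0 + n - l.+1 = (s0 + n - l.+1 - n) + n)%N by lia.
rewrite modnDr modn_small; lia.
Qed.

Lemma main_eq n (g1 c0 : G) (B : option G) l s0 (h1 h0 : G) :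
  (l < n)%N -> (s0 < n)%N -> g1 = h1 *+ n + p *+ l -> c0 = h0 *+ n + p *+ s0 ->
  (exists gam, lt g1 (c0 + gam *+ n) /\ ordlt (K:=K) (Some (c0 + gam *+ n)) B 0) <->
  ordlt (K:=K) (Some g1) B (- ((((s0 + n - l.+1) %% n).+1)%:Z)).
Proof.
move=> ln sn E1 E0.
have n0 : (0 < n)%N by apply: leq_ltn_trans ln.
have [n' En] : exists n', n = n'.+1 by exists n.-1; rewrite prednK.
set r := ((s0 + n - l.+1) %% n)%N.
have rn : (r < n)%N by rewrite /r ltn_mod.
have [kk Ekk] := nat_r n0 ln sn; rewrite -/r in Ekk.
set gam0 := h1 - h0 + p *+ kk.
have Eg : c0 + gam0 *+ n = g1 + p *+ r.+1.
  rewrite E0 E1 /gam0 mulrnDl mulrnBl -[RHS]addrA -mulrnDr addnS -addSn Ekk.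
  by rewrite mulrnDr mulrnA zrearr.
have pr : lt 0 (p *+ r.+1) by exact: pos_muln (p_pos K).
have g1lt : lt g1 (g1 + p *+ r.+1) by rewrite -{1}[g1]addr0; apply: lt_addl.
split.
- case=> gam [H1 H2].
  have key : ~ lt (c0 + gam *+ n) (g1 + p *+ r.+1).
    rewrite -Eg => H3.
    have H4 : lt (gam *+ n) (gam0 *+ n) by move/(lt_addl (- c0)): H3; rewrite !addKr.
    rewrite En in H4.
    have H5 : lt 0 (gam0 - gam) by apply: (proj1 (lt_sub0 gam gam0)); exact: lt_muln_rev H4.
    apply: (discrete H5).
    apply: (@lt_muln_rev q K _ _ n').
    (* (gam0 - gam) n = g1 + p(r+1) - (c0 + gam n) < p (r+1) <= p n *)
    have E6 : (gam0 - gam) *+ n'.+1 = g1 + p *+ r.+1 - (c0 + gam *+ n).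
      by rewrite -Eg En mulrnBl opprD addrACA subrr add0r.
    rewrite E6.
    apply: (@lt_nle_trans q K _ (p *+ r.+1)).
      move/lt_opp: H1 => H1; move: (lt_addl (g1 + p *+ r.+1) H1).
      by rewrite [X in vlt _ X]addrAC subrr add0r.
    have -> : (n'.+1 = r.+1 + (n'.+1 - r.+1))%N by rewrite subnKC // -En.
    rewrite mulrnDr -{2}[p *+ r.+1]addr0; apply: le_add2; first exact: vlt_irr.
    apply: nneg_muln => H7; apply: (lt_asym H7 (p_pos K)).
  case: B H2 => [g2|] H2; last by [].
  apply/ordltN; move/ordlt0: H2 => H2.
  exact: nle_lt_trans key H2.
- move=> H; exists gam0; split; first by rewrite Eg.
  case: B H => [g2|] H; last by [].
  by apply/ordlt0; rewrite Eg; apply/ordltN.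
Qed.

End Main.


Section Fin.
Variables (q : nat) (K : FqZField q).
Local Notation F := (vK K).
Local Notation G := (vG K).
Local Notation lt := (@vlt q K).
Local Notation v := (@vv q K).
Local Notation p := (vv (vpi K)).

Lemma ord_nz (y : F) : y != 0 -> ord y = Some (v y).
Proof. by rewrite /ord => /negPf ->. Qed.

Lemma nzE (y : F) : ordlt (ord y) (ord y) 1 <-> y != 0.
Proof.
have [->|y0] := eqVneq y 0; first by rewrite /ord eqxx; split => //; rewrite eqxx.
rewrite /ord (negPf y0) /=; split => // _.
rewrite mulr1z -{1}[v y]addr0; apply: lt_addl; exact: p_pos.
Qed.

Lemma inQ_zero n m s : (0 < m)%N -> (inQ (K:=K) 0 n m s <-> s = 0).
Proof.
move=> m0; split; first by case=> t [_ ->]; rewrite mul0r.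
move=> ->; have [t [Ht _]] := Q_exists n (0 : G) m0; exists t; split => //; by rewrite mul0r.
Qed.

Lemma inQ_ord lam n m (R : option G -> Prop) : (0 < m)%N -> lam != 0 ->
  (exists s, inQ (K:=K) lam n m s /\ R (ord s)) <-> exists gam, R (Some (v lam + gam *+ n)).
Proof.
move=> m0 l0; split.
- case=> s [[t [Ht ->]] HR]; have [t0 [g Eg]] := Q_val m0 Ht.
  exists g; by rewrite ord_nz ?mulf_neq0 // vv_mul // Eg in HR.
- case=> g HR; have [t [Ht Eg]] := Q_exists n g m0.
  have t0 : t != 0 by case: Ht => _ [].
  exists (lam * t); split; first by exists t.
  by rewrite ord_nz ?mulf_neq0 // vv_mul // Eg.
Qed.

End Fin.

Lemma precell_and_ord q (K : FqZField q) (L : expansion K)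
  (Delta : forall k : nat, (('I_k -> vK K) -> vK K) -> Prop) k
  (D : ('I_k -> vK K) -> Prop) (a b : ('I_k -> vK K) -> vK K) (l : int) :
  precell L Delta D -> Delta k a -> Delta k b ->
  precell L Delta (fun x => D x /\ ordlt (ord (a x)) (ord (b x)) l).
Proof.
case=> P [cP EP] Ha Hb; exists (fun x => P x /\ ordlt (ord (a x)) (ord (b x)) l); split.
  by apply: pc_and => //; apply: pc_ord.
by move=> x; rewrite EP.
Qed.

Lemma proj_reduce q (K : FqZField q) (L : expansion K)
  (Delta : forall k : nat, (('I_k -> vK K) -> vK K) -> Prop)
  (k : nat) (D : ('I_k -> vK K) -> Prop) (lam : vK K) (n m : nat)
  (a1 a2 c : ('I_k -> vK K) -> vK K) (b1 b2 : bool) :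
  precell_partition L Delta (fun x => D x /\ exists s, boxlt b1 (ord (a1 x)) (ord s) /\ boxlt b2 (ord s) (ord (a2 x)) /\ inQ lam n m s) ->
  precell_partition L Delta
    (fun x => exists t, cell_set D lam n m a1 a2 c b1 b2 x t).
Proof.
apply: pp_ext.
move=> x; split.
- case=> Dx [s [H1 [H2 H3]]]; exists (s + c x); rewrite /cell_set addrK; by [].
- case=> t [Dx [H1 [H2 H3]]]; split => //; by exists (t - c x).
Qed.

Theorem lemma2p2 (q : nat) (K : FqZField q) (L : expansion K)
  (Delta : forall k : nat, (('I_k -> vK K) -> vK K) -> Prop)
  (HDelta : forall k (a : ('I_k -> vK K) -> vK K), Delta k a -> order_definable L a)
  (k : nat) (D : ('I_k -> vK K) -> Prop) (lam : vK K) (n m : nat)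
  (a1 a2 c : ('I_k -> vK K) -> vK K) (b1 b2 : bool)
  (HD : precell L Delta D) (Hn : (0 < n)%N) (Hm : (0 < m)%N)
  (Ha1 : Delta k a1) (Ha2 : Delta k a2) (Hc : qf_def_fun L c)
  (Hcong : forall l : nat,
      precell_partition L Delta (fun x => ordcong (ord (a1 x)) l n)) :
  precell_partition L Delta
    (fun x => exists t, cell_set D lam n m a1 a2 c b1 b2 x t).
Proof.
apply: proj_reduce.
have [->|l0] := eqVneq lam 0.
  set W := (fun x => _).
  have EW : forall x, W x <-> D x /\ boxlt b1 (ord (a1 x)) None /\ boxlt b2 None (ord (a2 x)).
    move=> x; rewrite /W; split.
    - case=> Dx [s [H1 [H2 /(inQ_zero _ _ Hm) Es]]]; rewrite Es /ord eqxx in H1 H2; by [].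
    - case=> Dx [H1 H2]; split => //; exists 0; rewrite /ord eqxx; split => //; split => //.
      exact/(inQ_zero _ _ Hm).
  clearbody W; case: b2 EW => EW.
    by apply: pp_empty => x /EW [_ [_ []]].
  case: b1 EW => EW.
    apply: (@pp_ext _ _ _ _ _ (fun x => D x /\ ordlt (ord (a1 x)) (ord (a1 x)) 1)).
      move=> x; rewrite EW nzE /boxlt; split.
      - case=> Dx nz; split => //; split => //; by rewrite ord_nz.
      - case=> Dx [H _]; split => //; apply/negP => /eqP E; move: H; by rewrite E /ord eqxx.
    apply: pp_precell; exact: precell_and_ord.
  apply: (@pp_ext _ _ _ _ _ D); first by move=> x; rewrite EW /boxlt; tauto.
  exact: pp_precell.
set c0 := vv lam.
set W := (fun x => _).
have EW : forall x, W x <-> D x /\ exists gam,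
    boxlt b1 (ord (a1 x)) (Some (c0 + gam *+ n)) /\ boxlt b2 (Some (c0 + gam *+ n)) (ord (a2 x)).
  move=> x; rewrite /W; split.
  - case=> Dx HH; split => //.
    have := proj1 (@inQ_ord q K lam n m (fun o => boxlt b1 (ord (a1 x)) o /\ boxlt b2 o (ord (a2 x))) Hm l0).
    apply; case: HH => s [H1 [H2 H3]]; by exists s.
  - case=> Dx HH; split => //.
    have := proj2 (@inQ_ord q K lam n m (fun o => boxlt b1 (ord (a1 x)) o /\ boxlt b2 o (ord (a2 x))) Hm l0) HH.
    by case=> s [H1 [H2 H3]]; exists s.
clearbody W.
have Etriv : forall x, (exists gam, boxlt false (ord (a1 x)) (Some (c0 + gam *+ n))
      /\ boxlt true (Some (c0 + gam *+ n)) (ord (a2 x))).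
  move=> x; have [E2|nz2] := eqVneq (a2 x) 0.
    by exists 0; rewrite /boxlt E2 /ord eqxx.
  have [gam Hg] := @below q K n (vv (a2 x)) c0 Hn.
  by exists gam; split => //; rewrite /boxlt ord_nz //; apply/ordlt0.
case: b1 EW => EW; last first.
  apply: (@pp_ext _ _ _ _ _ D); last exact: pp_precell.
  move=> x; rewrite EW; split; last by case.
  move=> Dx; split => //.
  case: b2 EW => EW; first exact: Etriv.
  by exists 0.
case: b2 EW => EW; last first.
  apply: (@pp_ext _ _ _ _ _ (fun x => D x /\ ordlt (ord (a1 x)) (ord (a1 x)) 1)); last first.
    apply: pp_precell; exact: precell_and_ord.
  move=> x; rewrite EW nzE; split.
  - case=> Dx nz; split => //.
    have [gam Hg] := @above q K n (vv (a1 x)) c0 Hn.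
    by exists gam; split => //; rewrite /boxlt ord_nz //; apply/ordlt0.
  - case=> Dx [gam [H _]]; split => //; apply/negP => /eqP E; move: H; by rewrite /boxlt E /ord eqxx.
have [h0 [s0 [s0n E0]]] := @residue q K n c0 Hn.
apply: (@pp_ext _ _ _ _ _ (fun x => exists l, (l < n)%N /\ (ordcong (ord (a1 x)) l n /\
   (D x /\ ordlt (ord (a1 x)) (ord (a2 x)) (- (((s0 + n - l.+1) %% n).+1)%:Z))))).
  move=> x; rewrite EW; split.
  - case=> l [ln [Hco [Dx Ho]]]; split => //.
    have [E1|nz1] := eqVneq (a1 x) 0; first by move: Hco; rewrite E1 /ord eqxx.
    move: Hco Ho; rewrite ord_nz // => -[h1 Eh1] Ho.
    have Eg1 : vv (a1 x) = h1 *+ n + vv (vpi K) *+ l by rewrite -Eh1 subrK.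
    have [gam [G1 G2]] := proj2 (main_eq (ord (a2 x)) ln s0n Eg1 E0) Ho.
    by exists gam; split => //; apply/ordlt0.
  - case=> Dx [gam [H1 H2]].
    have [E1|nz1] := eqVneq (a1 x) 0; first by move: H1; rewrite /boxlt E1 /ord eqxx.
    move: H1; rewrite /boxlt ord_nz // => /ordlt0 H1.
    have [h1 [l [ln Eg1]]] := @residue q K n (vv (a1 x)) Hn.
    exists l; split => //; split; first by exists h1; rewrite Eg1 addrK.
    split => //.
    have := proj1 (main_eq (ord (a2 x)) ln s0n Eg1 E0); apply; by exists gam.
apply: pp_unionN.
  move=> l ln; apply: pp_inter => //; exact: precell_and_ord.
move=> l l' x ln ln' ll' [Hco _] [Hco' _].
have [E1|nz1] := eqVneq (a1 x) 0; first by move: Hco; rewrite E1 /ord eqxx.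
move: Hco Hco'; rewrite ord_nz // => -[h Eh] [h' Eh'].
apply: ll'; apply: (@residue_uniq q K n (vv (a1 x)) h h' l l') => //.
- by rewrite -Eh subrK.
- by rewrite -Eh' subrK.
Qed.
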